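(* Let $r\ge 0$, let $l_1,\ldots,l_r,\theta_1,\ldots,\theta_r,L$ be real numbers, $u_j=l_j+i\theta_j$, and for $z=x+iy$ ($x,y$ real) let $$A(z)=\begin{pmatrix}\cos y & -e^{x}\sin y\\ -e^{-x}\sin y & -\cos y\end{pmatrix},\qquad \Gamma_L=\begin{pmatrix}e^{L/2}&0\\0&e^{-L/2}\end{pmatrix}.$$ Then $$\operatorname{Tr}\big(A(u_1)A(u_2)\cdots A(u_r)\Gamma_L\big)=\sum_{I\subseteq\{1,\ldots,r\},\ |I|\text{ even}}(-1)^{s(I)}\sin(\theta_I)\cos(\theta_{\hat I})\big(e^{L/2-L_I}+(-1)^r e^{L_I-L/2}\big).$$ Equivalently, the right-hand side equals $\sum_{|I|\text{ even}}(-1)^{s(I)}2\sin(\theta_I)\cos(\theta_{\hat I})\cosh(L/2-L_I)$ when $r$ is even and $\sum_{|I|\text{ even}}(-1)^{s(I)}2\sin(\theta_I)\cos(\theta_{\hat I})\sinh(L/2-L_I)$ when $r$ is odd. (For $r=0$ the product of the $A$'s is the identity.)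
   Context: For a subset $I=\{i_1<\cdots<i_k\}\subseteq\{1,\ldots,r\}$ with $k$ even: $L_I=\sum_{j=1}^k(-1)^j l_{i_j}=-l_{i_1}+l_{i_2}-\cdots+l_{i_k}$; $s(I)=\sum_{m=1}^{k/2}(i_{2m}-i_{2m-1}+1)$; $\sin(\theta_I)=\prod_{i\in I}\sin\theta_i$; $\cos(\theta_{\hat I})=\prod_{i\in\{1,\ldots,r\}\setminus I}\cos\theta_i$. Empty products equal $1$, and for $I=\emptyset$, $L_I=0$ and $s(I)=0$. *)

(* Defs.v *)
From Stdlib Require Import Reals List Arith.
Import ListNotations.
Open Scope R_scope.

Record M2 := mkM2 { m11 : R; m12 : R; m21 : R; m22 : R }.

Definition M2mul (A B : M2) : M2 :=
  mkM2 (m11 A * m11 B + m12 A * m21 B) (m11 A * m12 B + m12 A * m22 B)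
       (m21 A * m11 B + m22 A * m21 B) (m21 A * m12 B + m22 A * m22 B).

Definition M2id : M2 := mkM2 1 0 0 1.

Definition M2tr (A : M2) : R := m11 A + m22 A.

Definition Amat (x y : R) : M2 :=
  mkM2 (cos y) (- exp x * sin y) (- exp (- x) * sin y) (- cos y).

Definition Gamma (L : R) : M2 := mkM2 (exp (L / 2)) 0 0 (exp (- (L / 2))).

(* A(u_1) A(u_2) ... A(u_r), with u_j = l j + i th j; identity for r = 0 *)
Definition Aprod (r : nat) (l th : nat -> R) : M2 :=
  fold_right (fun j P => M2mul (Amat (l j) (th j)) P) M2id (seq 1 r).

(* all sublists of s (as increasing lists when s is increasing) *)
Fixpoint powerset (s : list nat) : list (list nat) :=
  match s with
  | [] => [[]]
  | x :: t => map (cons x) (powerset t) ++ powerset t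
  end.

(* subsets of {1,...,r}, each given by its increasing list i_1 < ... < i_k *)
Definition subsets (r : nat) : list (list nat) := powerset (seq 1 r).

Fixpoint LI (l : nat -> R) (I : list nat) : R :=
  match I with
  | a :: b :: t => - l a + l b + LI l t
  | [a] => - l a
  | [] => 0
  end.

Fixpoint sI (I : list nat) : nat :=
  match I with
  | a :: b :: t => (b - a + 1 + sI t)%nat
  | _ => 0%nat
  end.

Definition prodR (f : nat -> R) (s : list nat) : R :=
  fold_right (fun i acc => f i * acc) 1 s.

Definition sinI (th : nat -> R) (I : list nat) : R := prodR (fun i => sin (th i)) I.

Definition cosIc (r : nat) (th : nat -> R) (I : list nat) : R :=
  prodR (fun i => cos (th i))
        (filter (fun i => negb (existsb (Nat.eqb i) I)) (seq 1 r)).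

Definition sum_even (r : nat) (F : list nat -> R) : R :=
  fold_right Rplus 0
    (map F (filter (fun I => Nat.even (length I)) (subsets r))).

(* Main.v *)
Require Import Defs.
From Stdlib Require Import Reals List Arith Lia.
Import ListNotations.
Open Scope R_scope.

Definition Sm (l : list (list nat)) (F : list nat -> R) : R := fold_right Rplus 0 (map F l).

Lemma sum_app l1 l2 F : Sm (l1 ++ l2) F = Sm l1 F + Sm l2 F.
Proof. unfold Sm; induction l1; simpl; [ring| rewrite IHl1; ring]. Qed.
Lemma sum_map (g : list nat -> list nat) l F : Sm (map g l) F = Sm l (fun x => F (g x)).
Proof. unfold Sm; rewrite map_map; reflexivity. Qed.
Lemma sum_lin2 l c1 c2 F G : c1 * Sm l F + c2 * Sm l G = Sm l (fun x => c1 * F x + c2 * G x).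
Proof. unfold Sm; induction l; simpl; [ring| rewrite <- IHl; ring]. Qed.
Lemma sum_add l F G : Sm l F + Sm l G = Sm l (fun x => F x + G x).
Proof. unfold Sm; induction l; simpl; [ring| rewrite <- IHl; ring]. Qed.
Lemma sum_ext_in l F G : (forall x, In x l -> F x = G x) -> Sm l F = Sm l G.
Proof. unfold Sm; intro H; f_equal; apply map_ext_in; auto. Qed.
Lemma sum_filter (p : list nat -> bool) l F :
  fold_right Rplus 0 (map F (filter p l)) = Sm l (fun x => if p x then F x else 0).
Proof. unfold Sm; induction l; simpl; auto. destruct (p a); simpl; rewrite IHl; ring. Qed.

Lemma powerset_in s I x : In I (powerset s) -> In x I -> In x s.
Proof.
  revert I; induction s as [|b t IH]; simpl; intros I HI Hx.
  - destruct HI as [<-|[]]; destruct Hx.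
  - apply in_app_or in HI; destruct HI as [HI|HI].
    + apply in_map_iff in HI; destruct HI as [J [<- HJ]].
      destruct Hx as [->|Hx]; [left; reflexivity| right; eapply IH; eauto].
    + right; eapply IH; eauto.
Qed.

Lemma LI_cons l a t : LI l (a :: t) = - l a - LI l t.
Proof.
  revert a; induction t as [|b t IH]; intros a; [simpl; ring|].
  change (LI l (a::b::t)) with (- l a + l b + LI l t). rewrite (IH b). ring.
Qed.

Definition sgn (a : nat) (I : list nat) : R :=
  match I with
  | [] => 1
  | b :: J => if Nat.even (length (b :: J)) then (-1) ^ sI (b :: J)
              else (-1) ^ ((b - a) + sI J)
  end.

Lemma sgn_even a I : Nat.even (length I) = true -> sgn a I = (-1) ^ sI I.
Proof. destruct I; simpl; intro E; [ring|]. rewrite E; reflexivity. Qed.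

Lemma sgn_shift a I : (forall x, In x I -> (S a <= x)%nat) ->
  sgn a I = (if Nat.even (length I) then 1 else -1) * sgn (S a) I.
Proof.
  intro H; destruct I as [|b J]; [simpl; ring|].
  unfold sgn. destruct (Nat.even (length (b :: J))) eqn:E; [ring|].
  assert (Hb : (S a <= b)%nat) by (apply H; left; reflexivity).
  replace (b - a)%nat with (S (b - S a)) by lia. simpl. ring.
Qed.

Lemma sgn_cons a I : (forall x, In x I -> (S a <= x)%nat) ->
  sgn a (a :: I) = sgn (S a) I.
Proof.
  intro H; destruct I as [|b J].
  - simpl; rewrite Nat.sub_diag; simpl; ring.
  - assert (Hb : (S a <= b)%nat) by (apply H; left; reflexivity).
    unfold sgn.
    change (length (a :: b :: J)) with (S (S (length J))).
    change (length (b :: J)) with (S (length J)).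
    change (sI (a :: b :: J)) with (b - a + 1 + sI J)%nat.
    change (Nat.even (S (S (length J)))) with (Nat.even (length J)).
    rewrite Nat.even_succ, <- Nat.negb_even.
    destruct (Nat.even (length J)) eqn:E; simpl negb; cbv iota.
    + replace (b - a + 1 + sI J)%nat with (2 + (b - S a + sI J))%nat by lia.
      rewrite pow_add; simpl; ring.
    + rewrite Nat.sub_diag; simpl. reflexivity.
Qed.

Definition cosC (s : list nat) (th : nat -> R) (I : list nat) : R :=
  prodR (fun i => cos (th i)) (filter (fun i => negb (existsb (Nat.eqb i) I)) s).

Lemma cosC_out a t th I : (forall x, In x I -> (S a <= x)%nat) ->
  cosC (a :: t) th I = cos (th a) * cosC t th I.
Proof.
  intro H; unfold cosC; simpl.
  destruct (existsb (Nat.eqb a) I) eqn:E.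
  - apply existsb_exists in E; destruct E as [x [Hx Hex]].
    apply Nat.eqb_eq in Hex; subst. specialize (H _ Hx); lia.
  - reflexivity.
Qed.

Lemma cosC_in a t th I : (forall x, In x t -> (S a <= x)%nat) ->
  cosC (a :: t) th (a :: I) = cosC t th I.
Proof.
  intro H; unfold cosC; simpl. rewrite Nat.eqb_refl; simpl.
  f_equal. apply filter_ext_in. intros x Hx.
  specialize (H _ Hx). destruct (Nat.eqb x a) eqn:E; [apply Nat.eqb_eq in E; lia|].
  reflexivity.
Qed.

Section S.
Variables (l th : nat -> R).
Definition Pr a n := fold_right (fun j P => M2mul (Amat (l j) (th j)) P) M2id (seq a n).
Definition W a s I := sgn a I * sinI th I * cosC s th I.

Lemma seq_ge a n x : In x (seq (S a) n) -> (S a <= x)%nat.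
Proof. intro H; apply in_seq in H; lia. Qed.

Lemma evS (k : nat) : Nat.even (S k) = negb (Nat.even k).
Proof. rewrite Nat.even_succ, <- Nat.negb_even; reflexivity. Qed.

Lemma main n : forall a,
  m11 (Pr a n) = Sm (powerset (seq a n)) (fun I => if Nat.even (length I) then W a (seq a n) I * exp (- LI l I) else 0) /\
  m22 (Pr a n) = Sm (powerset (seq a n)) (fun I => if Nat.even (length I) then (-1)^n * W a (seq a n) I * exp (LI l I) else 0) /\
  m12 (Pr a n) = Sm (powerset (seq a n)) (fun I => if Nat.even (length I) then 0 else (-1)^n * W a (seq a n) I * exp (- LI l I)) /\
  m21 (Pr a n) = Sm (powerset (seq a n)) (fun I => if Nat.even (length I) then 0 else - (W a (seq a n) I * exp (LI l I))).
Proof.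
  induction n as [|n IH]; intros a.
  - unfold Pr, W, Sm; simpl. rewrite Ropp_0, exp_0. unfold cosC; simpl. repeat split; ring.
  - destruct (IH (S a)) as [H11 [H22 [H12 H21]]].
    change (Pr a (S n)) with (M2mul (Amat (l a) (th a)) (Pr (S a) n)).
    change (seq a (S n)) with (a :: seq (S a) n).
    change (powerset (a :: seq (S a) n)) with
      (map (cons a) (powerset (seq (S a) n)) ++ powerset (seq (S a) n)).
    unfold M2mul, Amat; cbn [m11 m12 m21 m22].
    rewrite H11, H22, H12, H21, !sum_app, !sum_map, !sum_lin2, !sum_add.
    repeat split; apply sum_ext_in; intros I HI;
      assert (Hge : forall x, In x I -> (S a <= x)%nat)
        by (intros x Hx; apply (seq_ge a n); eapply powerset_in; eauto);
      assert (Hs : forall x, In x (seq (S a) n) -> (S a <= x)%nat) by (apply seq_ge);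
      change (length (a :: I)) with (S (length I)); rewrite evS;
      unfold W; rewrite (sgn_cons a I Hge), (sgn_shift a I Hge), (cosC_in a _ th I Hs),
        (cosC_out a _ th I Hge), LI_cons;
      change (sinI th (a :: I)) with (sin (th a) * sinI th I);
      destruct (Nat.even (length I)); simpl negb; cbv iota;
      rewrite ?Ropp_minus_distr; unfold Rminus; rewrite ?exp_plus, ?exp_Ropp; simpl pow.
    all: try field; try (repeat split; apply Rgt_not_eq; apply exp_pos).
Qed.
End S.

Theorem mainTheorem2 (r : nat) (l th : nat -> R) (L : R) :
  M2tr (M2mul (Aprod r l th) (Gamma L)) =
    sum_even r (fun I => (-1) ^ sI I * sinI th I * cosIc r th I *
                   (exp (L / 2 - LI l I) + (-1) ^ r * exp (LI l I - L / 2)))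
  /\ (Nat.Even r ->
      sum_even r (fun I => (-1) ^ sI I * sinI th I * cosIc r th I *
                   (exp (L / 2 - LI l I) + (-1) ^ r * exp (LI l I - L / 2)))
      = sum_even r (fun I => (-1) ^ sI I * 2 * sinI th I * cosIc r th I *
                   cosh (L / 2 - LI l I)))
  /\ (Nat.Odd r ->
      sum_even r (fun I => (-1) ^ sI I * sinI th I * cosIc r th I *
                   (exp (L / 2 - LI l I) + (-1) ^ r * exp (LI l I - L / 2)))
      = sum_even r (fun I => (-1) ^ sI I * 2 * sinI th I * cosIc r th I *
                   sinh (L / 2 - LI l I))).
Proof.
  split; [|split].
  - destruct (main l th r 1) as [H11 [H22 _]].
    change (Aprod r l th) with (Pr l th 1 r).
    unfold M2tr, M2mul, Gamma; cbn [m11 m12 m21 m22].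
    transitivity (exp (L/2) * Sm (powerset (seq 1 r)) (fun I => if Nat.even (length I) then W th 1 (seq 1 r) I * exp (- LI l I) else 0)
       + exp (-(L/2)) * Sm (powerset (seq 1 r)) (fun I => if Nat.even (length I) then (-1)^r * W th 1 (seq 1 r) I * exp (LI l I) else 0)).
    { rewrite <- H11, <- H22; ring. }
    rewrite sum_lin2. unfold sum_even, subsets. rewrite sum_filter.
    apply sum_ext_in; intros I _.
    destruct (Nat.even (length I)) eqn:E; [|ring].
    unfold W. rewrite (sgn_even 1 I E).
    change (cosC (seq 1 r) th I) with (cosIc r th I).
    unfold Rminus; rewrite !exp_plus. ring.
  - intros [k ->]. unfold sum_even. f_equal. apply map_ext; intro I.
    rewrite pow_1_even. unfold cosh.
    replace (LI l I - L / 2) with (- (L / 2 - LI l I)) by ring. field.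
  - intros [k ->]. unfold sum_even. f_equal. apply map_ext; intro I.
    replace (2 * k + 1)%nat with (S (2 * k)) by lia.
    rewrite pow_1_odd. unfold sinh.
    replace (LI l I - L / 2) with (- (L / 2 - LI l I)) by ring. field.
Qed.
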